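(* For any $\mathbf z\in\mathrm{Sym}^k\mathbb R$, there is a unique decomposition $\mathbf z=\mathbf z_1+\dots+\mathbf z_m$ such that each $\mathbf z_i$ is well contained in $B_{\mathbf z_i}$, and the boxes $B_{\mathbf z_i}$ are pairwise disjoint and ordered $B_{\mathbf z_1}<B_{\mathbf z_2}<\dots<B_{\mathbf z_m}$.
   Context: Fix $b>0$. For $x\in\mathbb R$ and $k\ge1$, $B_k(x)=[x-kb,x+kb]$. For a nonempty $\mathbf z\in\mathrm{Sym}^n\mathbb R$ (unordered tuple with multiplicity, $|\mathbf z|=n$, $+$ union with multiplicity), $c(\mathbf z)$ is the average of its points and $B_{\mathbf z}=B_{|\mathbf z|}(c(\mathbf z))$. Writing $\mathbf z=(x_1\le\dots\le x_n)$, a consecutive subset is $\{x_p,x_{p+1},\dots,x_q\}$. $\mathbf z$ is well contained in $B_{\mathbf z}$ if $B_{\mathbf z'}\subset B_{\mathbf z}$ for every consecutive subset $\mathbf z'\subset\mathbf z$. For intervals, $B<B'$ means every point of $B$ is less than every point of $B'$. *)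

(* Defs.v *)
(* Sym^n R is modelled by seq R up to permutation (perm_eq). *)
From mathcomp Require Import all_boot all_order all_algebra.
From mathcomp Require Import reals.
Set Implicit Arguments. Unset Strict Implicit. Unset Printing Implicit Defensive.
Import Order.TTheory GRing.Theory Num.Theory.
Local Open Scope ring_scope.

Section Boxes.
Variables (R : realType) (b : R).

(* c(z): average of the points of z (used only for nonempty z) *)
Definition center (z : seq R) : R := (\sum_(x <- z) x) / (size z)%:R.

Definition box (k : nat) (x : R) : pred R :=
  fun y => (x - k%:R * b <= y) && (y <= x + k%:R * b).

Definition boxz (z : seq R) : pred R := box (size z) (center z).

Definition box_sub (B B' : pred R) : Prop := forall y, B y -> B' y.

Definition box_lt (B B' : pred R) : Prop := forall x y, B x -> B' y -> x < y.

(* consecutive subset {x_p+1, ..., x_q} of z = (x_1 <= ... <= x_n), 0 <= p < q <= n *)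
Definition consec (z : seq R) (p q : nat) : seq R :=
  drop p (take q (sort <=%R z)).

Definition well_contained (z : seq R) : Prop :=
  forall p q : nat, (p < q)%N -> (q <= size z)%N ->
    box_sub (boxz (consec z p q)) (boxz z).

Definition good_decomp (z : seq R) (zs : seq (seq R)) : Prop :=
  perm_eq z (flatten zs) /\
  (forall i, (i < size zs)%N -> nth [::] zs i != [::]) /\
  (forall i, (i < size zs)%N -> well_contained (nth [::] zs i)) /\
  (forall i j, (i < j)%N -> (j < size zs)%N ->
     box_lt (boxz (nth [::] zs i)) (boxz (nth [::] zs j))).

End Boxes.

(* Main.v *)
Require Import Defs.
From mathcomp Require Import all_boot all_order all_algebra.
From mathcomp Require Import reals ring lra.
Set Implicit Arguments. Unset Strict Implicit. Unset Printing Implicit Defensive.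
Import Order.TTheory GRing.Theory Num.Theory.
Local Open Scope ring_scope.

Section Main.
Variables (R : realType) (b : R).
Hypothesis hb : 0 < b.

Definition lft (s : seq R) := center s - (size s)%:R * b.
Definition rgt (s : seq R) := center s + (size s)%:R * b.

Definition WCs (s : seq R) := forall p q : nat, (p < q)%N -> (q <= size s)%N ->
  lft s <= lft (drop p (take q s)) /\ rgt (drop p (take q s)) <= rgt s.

Lemma rad_ge0 (s : seq R) : 0 <= (size s)%:R * b.
Proof. by apply: mulr_ge0 => //; apply: ltW. Qed.

Lemma lft_le_rgt s : lft s <= rgt s.
Proof. rewrite /lft /rgt; have := rad_ge0 s; lra. Qed.

Lemma boxsubP (A B : seq R) :
  box_sub (boxz b A) (boxz b B) <-> lft B <= lft A /\ rgt A <= rgt B.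
Proof.
rewrite /box_sub /boxz /box -/(lft A) -/(rgt A) -/(lft B) -/(rgt B).
split.
  move=> H; have h1 := lft_le_rgt A.
  have /andP [H1 _] := H (lft A) (introT andP (conj (lexx _) h1)).
  have /andP [_ H2] := H (rgt A) (introT andP (conj h1 (lexx _))).
  by [].
move=> [h1 h2] y /andP [h3 h4]; apply/andP; split; lra.
Qed.

Lemma center_perm (s t : seq R) : perm_eq s t -> center s = center t.
Proof. by move=> P; rewrite /center (perm_big _ P) (perm_size P). Qed.

Lemma lft_perm s t : perm_eq s t -> lft s = lft t.
Proof. by move=> P; rewrite /lft (center_perm P) (perm_size P). Qed.
Lemma rgt_perm s t : perm_eq s t -> rgt s = rgt t.
Proof. by move=> P; rewrite /rgt (center_perm P) (perm_size P). Qed.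

Lemma perm_sort_l (s : seq R) : perm_eq (sort <=%R s) s.
Proof. by rewrite perm_sort. Qed.

Lemma wc_sort (s : seq R) : well_contained b s <-> WCs (sort <=%R s).
Proof.
rewrite /well_contained /WCs /consec size_sort.
split=> H p q pq qs.
  have := H p q pq qs; rewrite boxsubP; by rewrite (lft_perm (perm_sort_l s)) (rgt_perm (perm_sort_l s)).
rewrite boxsubP -(lft_perm (perm_sort_l s)) -(rgt_perm (perm_sort_l s)); exact: H.
Qed.

Lemma center_mul (s : seq R) : s != [::] -> center s * (size s)%:R = \sum_(x <- s) x.
Proof.
move=> ne; rewrite /center divfK // pnatr_eq0 size_eq0 //.
Qed.

Lemma drop_take1 (s : seq R) i : (i < size s)%N -> drop i (take i.+1 s) = [:: nth 0 s i].
Proof.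
elim: s i => [|x s IH] [|i] //= H.
by rewrite take0.
by apply: IH.
Qed.

Lemma center1 (x : R) : center [:: x] = x.
Proof. by rewrite /center big_cons big_nil addr0 divr1. Qed.

Lemma mem_box (s : seq R) x : WCs s -> x \in s -> lft s + b <= x /\ x + b <= rgt s.
Proof.
move=> W xs; have i_lt : (index x s < size s)%N by rewrite index_mem.
have [h1 h2] := W _ _ (ltnSn _) i_lt.
rewrite drop_take1 // nth_index // /lft /rgt center1 /= in h1 h2.
rewrite mul1r in h1 h2; rewrite /lft /rgt; split; lra.
Qed.


Lemma key_ineq (a d A D s1 s2 M1 M2 : R) :
  0 <= a -> a <= A -> 0 <= d -> d <= D -> 0 < A -> 0 < D ->
  s1 + a * a * b <= a * (M1 + A * b) -> s2 + d * d * b <= d * (M2 + D * b) ->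
  M2 - D * b <= M1 + A * b -> M1 - A * b <= M2 + D * b ->
  (A + D) * (s1 + s2) + (a + d) * (a + d) * (A + D) * b <=
           (a + d) * (A * M1 + D * M2) + (A + D) * (A + D) * (a + d) * b.
Proof.
move=> a0 aA d0 dD A0 D0 h1 h2 h3 h4.
have AD0 : 0 <= A + D by rewrite addr_ge0 // ltW.
have b0 : 0 <= b by rewrite ltW.
have f1 : (A + D) * (s1 + a * a * b) <= (A + D) * (a * (M1 + A * b)).
  by rewrite ler_wpM2l.
have f2 : (A + D) * (s2 + d * d * b) <= (A + D) * (d * (M2 + D * b)).
  by rewrite ler_wpM2l.
have [c1|c2] := lerP (a * D) (d * A).
  have f3 : (d * A - a * D) * (M2 - M1) <= (d * A - a * D) * ((A + D) * b).
    by rewrite ler_wpM2l ?subr_ge0 //; move: h3; clear; lra.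
  have f4 : 0 <= (A + D) * b * (a * (D - d)).
    by rewrite !mulr_ge0 // subr_ge0.
  move: f1 f2 f3 f4; clear; nra.
have f3 : (a * D - d * A) * (M1 - M2) <= (a * D - d * A) * ((A + D) * b).
  have g : 0 <= (a * D - d * A) * ((A + D) * b - (M1 - M2)).
    apply: mulr_ge0; first by rewrite subr_ge0 ltW.
    by move: h4; clear; lra.
  move: g; clear; nra.
have f4 : 0 <= (A + D) * b * (d * (A - a)).
  by rewrite !mulr_ge0 // subr_ge0.
move: f1 f2 f3 f4; clear; nra.
Qed.

Lemma alg_r (a d A D s1 s2 M1 M2 cw cZ : R) :
  0 <= a -> a <= A -> 0 <= d -> d <= D -> 0 < a + d -> 0 < A -> 0 < D ->
  cw * (a + d) = s1 + s2 -> cZ * (A + D) = A * M1 + D * M2 ->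
  s1 + a * a * b <= a * (M1 + A * b) -> s2 + d * d * b <= d * (M2 + D * b) ->
  M2 - D * b <= M1 + A * b -> M1 - A * b <= M2 + D * b ->
  cw + (a + d) * b <= cZ + (A + D) * b.
Proof.
move=> a0 aA d0 dD ad0 A0 D0 Ecw EcZ h1 h2 h3 h4.
have key := key_ineq a0 aA d0 dD A0 D0 h1 h2 h3 h4.
have AD0 : 0 < A + D by rewrite addr_gt0.
have P0 : 0 < (a + d) * (A + D) by apply: mulr_gt0.
rewrite -(ler_pM2r P0).
have e1 : (cw + (a + d) * b) * ((a + d) * (A + D)) =
   (A + D) * (s1 + s2) + (a + d) * (a + d) * (A + D) * b.
  by rewrite -Ecw; ring.
have e2 : (cZ + (A + D) * b) * ((a + d) * (A + D)) =
   (a + d) * (A * M1 + D * M2) + (A + D) * (A + D) * (a + d) * b.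
  by rewrite -EcZ; ring.
by rewrite e1 e2.
Qed.

Lemma alg_l (a d A D s1 s2 M1 M2 cw cZ : R) :
  0 <= a -> a <= A -> 0 <= d -> d <= D -> 0 < a + d -> 0 < A -> 0 < D ->
  cw * (a + d) = s1 + s2 -> cZ * (A + D) = A * M1 + D * M2 ->
  a * (M1 - A * b) <= s1 - a * a * b -> d * (M2 - D * b) <= s2 - d * d * b ->
  M2 - D * b <= M1 + A * b -> M1 - A * b <= M2 + D * b ->
  cZ - (A + D) * b <= cw - (a + d) * b.
Proof.
move=> a0 aA d0 dD ad0 A0 D0 Ecw EcZ h1 h2 h3 h4.
have := @alg_r d a D A (- s2) (- s1) (- M2) (- M1) (- cw) (- cZ) d0 dD a0 aA
  (ltac:(lra)) D0 A0.
have e1 : - cw * (d + a) = - s2 + - s1.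
  by move: Ecw; clear; lra.
have e2 : - cZ * (D + A) = D * - M2 + A * - M1.
  by move: EcZ; clear; lra.
move=> /(_ e1 e2).
have g1 : - s2 + d * d * b <= d * (- M2 + D * b) by move: h2; clear; lra.
have g2 : - s1 + a * a * b <= a * (- M1 + A * b) by move: h1; clear; lra.
have g3 : - M1 - A * b <= - M2 + D * b by lra.
have g4 : - M2 - D * b <= - M1 + A * b by lra.
move=> /(_ g1 g2 g3 g4). lra.
Qed.


Lemma drop_take_cat (Y X : seq R) p q :
  drop p (take q (Y ++ X)) =
  drop p (take q Y) ++ drop (p - size Y) (take (q - size Y) X).
Proof.
rewrite take_cat; case: ltnP => hq.
  have -> : (q - size Y = 0)%N by apply/eqP; rewrite subn_eq0 ltnW.
  by rewrite take0 /= cats0.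
rewrite drop_cat (take_oversize hq); case: ltnP => hp.
  have -> : (p - size Y = 0)%N by apply/eqP; rewrite subn_eq0 ltnW.
  by rewrite drop0.
by rewrite (drop_oversize hp).
Qed.

Lemma take_minn (Y : seq R) q : take (minn q (size Y)) Y = take q Y.
Proof.
case: (leqP q (size Y)) => h //.
by rewrite take_size take_oversize // ltnW.
Qed.

Lemma part_bounds (Y : seq R) p q : WCs Y ->
  let w := drop p (take q Y) in
  let a := (size w)%:R in
  (size w <= size Y)%N /\
  a * (center Y - (size Y)%:R * b) <= \sum_(x <- w) x - a * a * b /\
  \sum_(x <- w) x + a * a * b <= a * (center Y + (size Y)%:R * b).
Proof.
move=> W w a.
have sw : (size w <= size Y)%N.
  by rewrite /w size_drop size_take; apply: leq_trans (leq_subr _ _) _; apply: geq_minr.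
split=> //.
have [w0|wn] := eqVneq w [::].
  rewrite /a w0 /= big_nil !mul0r; split; lra.
have hp : (p < minn q (size Y))%N.
  move: wn; rewrite /w -size_eq0 size_drop size_take.
  rewrite /minn; case: ltnP => h; rewrite subn_eq0 -ltnNge //; by move=> ->.
have [h1 h2] := W p (minn q (size Y)) hp (geq_minr _ _).
rewrite take_minn -/w /lft /rgt in h1 h2.
have a0 : 0 <= a by [].
rewrite -(center_mul wn) -/a.
have f1 := ler_wpM2l a0 h1.
have f2 := ler_wpM2l a0 h2.
split.
  move: f1; rewrite -/a; clear; nra.
move: f2; rewrite -/a; clear; nra.
Qed.


Lemma sum_cat (s t : seq R) : \sum_(x <- s ++ t) x = \sum_(x <- s) x + \sum_(x <- t) x.
Proof. by rewrite big_cat. Qed.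

Lemma merge_wc (Y X : seq R) : Y != [::] -> X != [::] -> WCs Y -> WCs X ->
  sorted <=%R (Y ++ X) -> ~~ (rgt Y < lft X) -> WCs (Y ++ X).
Proof.
move=> Yn Xn WY WX srt nlt.
have h3 : lft X <= rgt Y by rewrite leNgt.
have h4 : lft Y <= rgt X.
  case: Y Yn WY srt {h3 nlt} => // y Y _ WY srt.
  case: X Xn WX srt => // x X _ WX srt.
  have [hy _] := mem_box WY (mem_head y Y).
  have [_ hx] := mem_box WX (mem_head x X).
  move: srt; rewrite (sorted_pairwise le_trans) pairwise_cat => /and3P [/allrelP al _ _].
  have := al y x (mem_head _ _) (mem_head _ _).
  have := ltW hb; lra.
move=> p q pq qs.
rewrite drop_take_cat.
set w1 := drop p (take q Y).
set w2 := drop (p - size Y) (take (q - size Y) X).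
have [sw1 [l1 r1]] := part_bounds p q WY.
have [sw2 [l2 r2]] := part_bounds (p - size Y) (q - size Y) WX.
rewrite -/w1 in sw1 l1 r1; rewrite -/w2 in sw2 l2 r2.
have wn : w1 ++ w2 != [::].
  rewrite -drop_take_cat -size_eq0 size_drop size_take.
  rewrite /minn; case: ltnP => h; rewrite subn_eq0 -ltnNge //.
  by apply: leq_trans pq _.
have Ew := center_mul wn.
have EZ := center_mul (ltac:(by case: (Y) Yn) : Y ++ X != [::]).
rewrite sum_cat -(center_mul Yn) -(center_mul Xn) size_cat natrD in EZ.
rewrite sum_cat size_cat natrD in Ew.
have A0 : 0 < (size Y)%:R :> R by rewrite ltr0n lt0n size_eq0.
have D0 : 0 < (size X)%:R :> R by rewrite ltr0n lt0n size_eq0.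
have ad0 : 0 < (size w1)%:R + (size w2)%:R :> R.
  by rewrite -natrD ltr0n -size_cat lt0n size_eq0.
rewrite /lft /rgt !size_cat !natrD.
move: h3 h4; rewrite /lft /rgt => h3 h4.
split.
  apply: (alg_l (s1 := \sum_(x <- w1) x) (s2 := \sum_(x <- w2) x) (M1 := center Y) (M2 := center X)).
  all: try (by rewrite ler_nat); try (by []); try (by rewrite EZ; ring).
  all: try (by move: h3; clear; lra); try (by move: h4; clear; lra).
apply: (alg_r (s1 := \sum_(x <- w1) x) (s2 := \sum_(x <- w2) x) (M1 := center Y) (M2 := center X)).
all: try (by rewrite ler_nat); try (by []); try (by rewrite EZ; ring).
all: try (by move: h3; clear; lra); try (by move: h4; clear; lra).
Qed.


Definition gb (s : seq R) := [/\ s != [::], sorted <=%R s & WCs s].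
Definition rlt (X Y : seq R) : bool := rgt X < lft Y.

Lemma rlt_trans : transitive rlt.
Proof.
move=> Y X Z; rewrite /rlt => h1 h2.
have := lft_le_rgt Y; lra.
Qed.

Lemma push (xs : seq (seq R)) (Y : seq R) : gb Y -> (forall X, X \in xs -> gb X) ->
  sorted rlt xs -> sorted <=%R (Y ++ flatten xs) ->
  exists ys, [/\ flatten ys = Y ++ flatten xs, (forall X, X \in ys -> gb X) & sorted rlt ys].
Proof.
elim: xs Y => [|X xs IH] Y gY gxs sxs sY.
  exists [:: Y]; split => //; try (by rewrite /= cats0).
  by move=> X; rewrite inE => /eqP ->.
case: (boolP (rlt Y X)) => hYX.
  exists [:: Y, X & xs]; split => //.
    by move=> Z; rewrite inE => /orP [/eqP -> //|]; apply: gxs.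
  by rewrite /= hYX.
have gX : gb X by apply: gxs; rewrite mem_head.
case: gY => Yn sY' WY; case: gX => Xn sX WX.
have sYX : sorted <=%R (Y ++ X).
  by move: sY => /=; rewrite catA => /cat_sorted2 [].
have gYX : gb (Y ++ X).
  split => //; first by case: (Y) Yn.
  exact: merge_wc.
have sYXf : sorted <=%R ((Y ++ X) ++ flatten xs) by move: sY => /=; rewrite catA.
have [ys [e1 e2 e3]] := IH (Y ++ X) gYX (fun Z hZ => gxs Z (@mem_behead _ (X :: xs) Z hZ))
  (path_sorted sxs) sYXf.
by exists ys; split => //; rewrite e1 /= catA.
Qed.

Lemma exists_dec (s : seq R) : sorted <=%R s ->
  exists ys, [/\ flatten ys = s, (forall X, X \in ys -> gb X) & sorted rlt ys].
Proof.
elim: s => [|x s IH] hs; first by exists [::].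
have [ys [e1 e2 e3]] := IH (path_sorted hs).
have g1 : gb [:: x].
  split => //.
  move=> p q pq qs; have q1 : q = 1%N by apply/eqP; rewrite eqn_leq qs; apply: leq_trans pq.
  subst q; have -> : p = 0%N by move: pq; case: p.
  by rewrite drop0 /=; split; exact: lexx.
have sx : sorted <=%R ([:: x] ++ flatten ys) by rewrite e1.
have [zs [f1 f2 f3]] := push g1 e2 e3 sx.
by exists zs; split => //; rewrite f1 e1.
Qed.


Lemma lft_cat_ge (X T : seq R) : X != [::] -> T != [::] -> rgt X <= lft T ->
  lft X <= lft (X ++ T).
Proof.
move=> Xn Tn; rewrite /lft /rgt size_cat natrD => h.
have EZ := center_mul (ltac:(by case: (X) Xn) : X ++ T != [::]).
rewrite sum_cat -(center_mul Xn) -(center_mul Tn) size_cat natrD in EZ.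
set m := (size X)%:R in h EZ *; set n := (size T)%:R in h EZ *.
have m0 : 0 < m by rewrite ltr0n lt0n size_eq0.
have n0 : 0 < n by rewrite ltr0n lt0n size_eq0.
have P0 : 0 < m + n by rewrite addr_gt0.
rewrite -(ler_pM2r P0).
have e1 : (center (X ++ T) - (m + n) * b) * (m + n) =
   center X * m + center T * n - (m + n) * (m + n) * b.
  by rewrite -EZ; ring.
rewrite e1.
have g : n * ((m + n) * b) <= n * (center T - center X).
  by rewrite (ler_wpM2l (ltW n0)); move: h; clear; lra.
move: g; clear; nra.
Qed.

Lemma lft_prefix (xs : seq (seq R)) (Z : seq R) k : gb Z ->
  (forall X, X \in xs -> gb X) -> sorted rlt (Z :: xs) -> (0 < k)%N ->
  lft Z <= lft (take k (Z ++ flatten xs)).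
Proof.
elim: xs Z k => [|Z2 xs IH] Z k gZ gxs sxs k0.
  rewrite cats0; case: gZ => Zn sZ WZ.
  case: (leqP (size Z) k) => h; first by rewrite take_oversize.
  have [h1 _] := WZ 0%N k k0 (ltnW h); by rewrite drop0 in h1.
case: gZ => Zn sZ WZ.
rewrite take_cat; case: ltnP => h.
  have [h1 _] := WZ 0%N k k0 (ltnW h); by rewrite drop0 in h1.
set T := take (k - size Z) (flatten (Z2 :: xs)).
have [T0|Tn] := eqVneq T [::]; first by rewrite T0 cats0.
apply: lft_cat_ge => //.
have k1 : (0 < k - size Z)%N.
  by rewrite lt0n; apply: contra Tn => /eqP E0; rewrite /T E0 take0.
have gZ2 : gb Z2 by apply: gxs; rewrite mem_head.
have := IH Z2 (k - size Z)%N gZ2 (fun X hX => gxs X (@mem_behead _ (Z2 :: xs) X hX))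
  (path_sorted sxs) k1.
rewrite -/T; move: sxs => /= /andP [r _]; move: r; rewrite /rlt => r.
move=> h2; apply: ltW; apply: lt_le_trans r h2.
Qed.

Lemma contra_pref (X : seq R) xs (Y : seq R) F2 :
  gb X -> (forall Z, Z \in xs -> gb Z) -> sorted rlt (X :: xs) -> gb Y ->
  X ++ flatten xs = Y ++ F2 -> (size X < size Y)%N -> False.
Proof.
move=> gX gxs sxs gY E lt.
set T := take (size Y - size X) (flatten xs).
have EY : Y = X ++ T.
  have := congr1 (take (size Y)) E.
  rewrite [take _ (Y ++ _)]take_size_cat // take_cat ltnNge (ltnW lt) /= => <-.
  by [].
have Tn : T != [::].
  apply/eqP => T0; move: lt; rewrite EY T0 cats0 ltnn.
  by [].
case: xs gxs sxs E @T EY Tn => [|Z xs] gxs sxs E T EY Tn.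
  by move: Tn; rewrite /T /=.
have gZ : gb Z by apply: gxs; rewrite mem_head.
have k0 : (0 < size Y - size X)%N by rewrite subn_gt0.
have h1 := lft_prefix gZ (fun W hW => gxs W (@mem_behead _ (Z :: xs) W hW))
  (path_sorted sxs) k0.
rewrite -/T in h1.
move: sxs => /= /andP [r _]; move: r; rewrite /rlt => r.
case: gY => Yn sY WY.
case: gX => Xn _ _.
have [l1 _] := WY 0%N (size X) (ltac:(by rewrite lt0n size_eq0)) (ltnW lt).
have [_ r1] := WY (size X) (size Y) lt (leqnn _).
rewrite drop0 {2}EY take_size_cat // in l1.
rewrite take_size {1}EY drop_size_cat // in r1.
have sY' : (size Y)%:R = (size X)%:R + (size T)%:R :> R by rewrite {1}EY size_cat natrD.
move: l1 r1 h1 r; rewrite /lft /rgt sY'.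
clear; lra.
Qed.

Lemma uniq_dec (xs ys : seq (seq R)) :
  (forall X, X \in xs -> gb X) -> sorted rlt xs ->
  (forall X, X \in ys -> gb X) -> sorted rlt ys ->
  flatten xs = flatten ys -> xs = ys.
Proof.
elim: xs ys => [|X xs IH] [|Y ys] gxs sxs gys sys //=.
- have [Yn _ _] := gys Y (mem_head _ _).
  by case: (Y) Yn.
- have [Xn _ _] := gxs X (mem_head _ _).
  by case: (X) Xn.
move=> E.
have gX := gxs X (mem_head _ _); have gY := gys Y (mem_head _ _).
have gxs' := fun Z hZ => gxs Z (@mem_behead _ (X :: xs) Z hZ).
have gys' := fun Z hZ => gys Z (@mem_behead _ (Y :: ys) Z hZ).
case: (ltngtP (size X) (size Y)) => h.
- by case: (contra_pref gX gxs' sxs gY E h).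
- by case: (contra_pref gY gys' sys gX (esym E) h).
have EXY : X = Y.
  have := congr1 (take (size X)) E.
  by rewrite take_size_cat // take_size_cat.
subst Y; congr (_ :: _).
apply: IH; [exact: gxs' | exact: path_sorted sxs | exact: gys' | exact: path_sorted sys |].
by have := congr1 (drop (size X)) E; rewrite !drop_size_cat.
Qed.


Lemma gb_wc (X : seq R) : gb X -> well_contained b X.
Proof.
case=> _ sX WX; apply/wc_sort; by rewrite (sorted_sort le_trans sX).
Qed.

Lemma rlt_boxlt (X Y : seq R) : rlt X Y -> box_lt (boxz b X) (boxz b Y).
Proof.
rewrite /rlt /box_lt /boxz /box -/(lft X) -/(rgt X) -/(lft Y) -/(rgt Y).
move=> h x y /andP [_ hx] /andP [hy _]; lra.
Qed.

Lemma boxlt_rlt (X Y : seq R) : box_lt (boxz b X) (boxz b Y) -> rlt X Y.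
Proof.
rewrite /rlt /box_lt /boxz /box -/(lft X) -/(rgt X) -/(lft Y) -/(rgt Y).
move=> H; apply: H; apply/andP; split; rewrite ?lexx ?lft_le_rgt //.
Qed.

Lemma flatten_sorted (xs : seq (seq R)) : (forall X, X \in xs -> gb X) ->
  sorted rlt xs -> sorted <=%R (flatten xs).
Proof.
elim: xs => [|X xs IH] gxs sxs //=.
have [_ sX WX] := gxs X (mem_head _ _).
rewrite (sorted_pairwise le_trans) pairwise_cat; apply/and3P; split.
- apply/allrelP => x y hx /flattenP [Z hZ hy].
  have rXZ : rlt X Z by have /allP := order_path_min rlt_trans sxs; apply.
  have [_ gZ WZ] := gxs Z (@mem_behead _ (X :: xs) Z hZ).
  have [_ h1] := mem_box WX hx.
  have [h2 _] := mem_box WZ hy.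
  move: rXZ; rewrite /rlt => r; have := ltW hb; lra.
- by rewrite -sorted_pairwise //; exact: le_trans.
rewrite -sorted_pairwise; last exact: le_trans.
apply: IH; last exact: path_sorted sxs.
by move=> Z hZ; apply: gxs; exact: (@mem_behead _ (X :: xs) Z hZ).
Qed.

Lemma perm_flatten_sort (zs : seq (seq R)) :
  perm_eq (flatten (map (sort <=%R) zs)) (flatten zs).
Proof.
elim: zs => [|Z zs IH] //=.
by rewrite perm_cat // perm_sort_l.
Qed.

Lemma to_sorted (z : seq R) zs : good_decomp b z zs ->
  [/\ (forall X, X \in map (sort <=%R) zs -> gb X),
      sorted rlt (map (sort <=%R) zs) &
      flatten (map (sort <=%R) zs) = sort <=%R z].
Proof.
case=> pz [ne [wc lt]].
have gT : forall X, X \in map (sort <=%R) zs -> gb X.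
  move=> X /mapP [Z hZ ->].
  have hi : (index Z zs < size zs)%N by rewrite index_mem.
  have Zn := ne _ hi; have W := wc _ hi.
  rewrite nth_index // in Zn W.
  split.
  - by rewrite -size_eq0 size_sort size_eq0.
  - apply: sort_sorted; exact: le_total.
  - exact/wc_sort.
split => //.
  apply/(sortedP [::]) => i; rewrite size_map => hi.
  rewrite !(nth_map [::]) // ?(ltnW hi) //.
  rewrite /rlt (rgt_perm (perm_sort_l _)) (lft_perm (perm_sort_l _)).
  by apply: boxlt_rlt; apply: lt.
apply: le_sorted_eq.
- apply: flatten_sorted => //.
  apply/(sortedP [::]) => i; rewrite size_map => hi.
  rewrite !(nth_map [::]) // ?(ltnW hi) //.
  rewrite /rlt (rgt_perm (perm_sort_l _)) (lft_perm (perm_sort_l _)).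
  by apply: boxlt_rlt; apply: lt.
- apply: sort_sorted; exact: le_total.
apply: (@perm_trans _ (flatten zs)); first exact: perm_flatten_sort.
apply: (@perm_trans _ z); first by rewrite perm_sym.
by rewrite perm_sym perm_sort_l.
Qed.

Lemma main_thm (z : seq R) :
  (exists zs : seq (seq R), good_decomp b z zs) /\
  (forall zs ws : seq (seq R), good_decomp b z zs -> good_decomp b z ws ->
     size zs = size ws /\
     (forall i, (i < size zs)%N -> perm_eq (nth [::] zs i) (nth [::] ws i))).
Proof.
split.
  have [ys [e1 e2 e3]] := exists_dec (sort_sorted (@le_total _ R) z).
  exists ys; split; first by rewrite e1 perm_sym perm_sort_l.
  split.
    by move=> i hi; have [] := e2 _ (mem_nth [::] hi).
  split.
    by move=> i hi; apply: gb_wc; apply: e2; apply: mem_nth.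
  move=> i j ij hj; apply: rlt_boxlt.
  apply: (sorted_ltn_nth rlt_trans [::] e3) => //; rewrite inE //.
  exact: ltn_trans ij hj.
move=> zs ws hz hw.
have [g1 s1 f1] := to_sorted hz.
have [g2 s2 f2] := to_sorted hw.
have E := uniq_dec g1 s1 g2 s2 (etrans f1 (esym f2)).
have sz : size zs = size ws by rewrite -(size_map (sort <=%R) zs) E size_map.
split => // i hi.
have := congr1 (nth [::] ^~ i) E; rewrite /= !(nth_map [::]) -?sz //.
by move/perm_sort_leP.
Qed.

End Main.

Theorem lemma4p2 (R : realType) (b : R) (hb : 0 < b) (z : seq R) :
  (exists zs : seq (seq R), good_decomp b z zs) /\
  (forall zs ws : seq (seq R), good_decomp b z zs -> good_decomp b z ws ->
     size zs = size ws /\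
     (forall i, (i < size zs)%N -> perm_eq (nth [::] zs i) (nth [::] ws i))).
Proof. exact: main_thm hb z. Qed.
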